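(* Let $\Sigma\cup\{\sigma\}$ be a finite set of marginal identity atoms, each of the form $x_1\ldots x_n\approx y_1\ldots y_n$ where $x_1,\dots,x_n$ are pairwise distinct variables and $y_1,\dots,y_n$ are pairwise distinct variables. Then $\Sigma\models\sigma$ if and only if $\Sigma\vdash\sigma$, where $\vdash$ is derivability using the following rules: (1) reflexivity: $x_1\ldots x_n\approx x_1\ldots x_n$; (2) symmetry: from $x_1\ldots x_n\approx y_1\ldots y_n$ infer $y_1\ldots y_n\approx x_1\ldots x_n$; (3) projection and permutation: from $x_1\ldots x_n\approx y_1\ldots y_n$ infer $x_{i_1}\ldots x_{i_k}\approx y_{i_1}\ldots y_{i_k}$ for any sequence $i_1,\dots,i_k$ of distinct integers from $\{1,\dots,n\}$; (4) transitivity: from $x_1\ldots x_n\approx y_1\ldots y_n$ and $y_1\ldots y_n\approx z_1\ldots z_n$ infer $x_1\ldots x_n\approx z_1\ldots z_n$.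
   Context: A probabilistic team is a function $\mathbb X\colon X\to[0,1]$ with $\sum_{s\in X}\mathbb X(s)=1$, where $X$ is a finite set of assignments from a finite set of variables into some set of values. For a tuple of variables $\vec x$ and tuple of values $\vec a$, $|\mathbb X_{\vec x=\vec a}|$ is the total weight $\sum\{\mathbb X(s): s(\vec x)=\vec a\}$. A probabilistic team $\mathbb X$ (whose variable domain contains all variables involved) satisfies $\vec x\approx\vec y$ ($\vec x,\vec y$ of equal length) if $|\mathbb X_{\vec x=\vec a}|=|\mathbb X_{\vec y=\vec a}|$ for every tuple of values $\vec a$. $\Sigma\models\sigma$ means every probabilistic team satisfying all atoms of $\Sigma$ also satisfies $\sigma$. A proof of $\sigma$ from $\Sigma$ is a finite sequence of marginal identity atoms ending in $\sigma$, each of which is in $\Sigma$ or follows from earlier ones by one of the rules; $\Sigma\vdash\sigma$ means such a proof exists. *)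

(* Defs.v *)
From HB Require Import structures.
From mathcomp Require Import all_boot all_order all_algebra.
From mathcomp Require Import Rstruct.
From Stdlib Require Rdefinitions.
Set Implicit Arguments. Unset Strict Implicit. Unset Printing Implicit Defensive.
Import Order.TTheory GRing.Theory Num.Theory.
Local Open Scope ring_scope.

Definition var := nat.

Definition atom := (seq var * seq var)%type.

Definition wf_atom (a : atom) : bool :=
  [&& uniq a.1, uniq a.2 & size a.1 == size a.2].

Definition atom_vars (a : atom) : seq var := a.1 ++ a.2.

(* A probabilistic team over values V: a finite set X of assignments
   (indexed by the finite type I, assignment of row i is [row i], meaningful
   on the finite variable domain [dom]); distinct rows are distinct
   assignments on dom; weights in [0,1] summing to 1. *)
Record pteam (V : eqType) := PTeam {
  dom : seq var;
  idx : finType;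
  row : idx -> var -> V;
  wt : idx -> Rdefinitions.R;
  wt_range : forall i, 0 <= wt i <= 1;
  wt_sum : \sum_(i : idx) wt i = 1;
  row_inj : forall i j, (forall x, x \in dom -> row i x = row j x) -> i = j
}.

Definition marg (V : eqType) (T : pteam V) (x : seq var) (a : seq V) : Rdefinitions.R :=
  \sum_(i : idx T | [seq row i v | v <- x] == a) wt i.

Definition sat (V : eqType) (T : pteam V) (a : atom) : Prop :=
  {subset atom_vars a <= dom T} /\
  forall t : seq V, marg T a.1 t = marg T a.2 t.

Definition models (Sigma : seq atom) (sigma : atom) : Prop :=
  forall (V : eqType) (T : pteam V),
    {subset flatten [seq atom_vars a | a <- sigma :: Sigma] <= dom T} ->
    (forall a, a \in Sigma -> sat T a) -> sat T sigma.

Inductive derivable (Sigma : seq atom) : atom -> Prop :=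
| d_ax : forall a, a \in Sigma -> derivable Sigma a
| d_refl : forall x : seq var, derivable Sigma (x, x)
| d_sym : forall x y, derivable Sigma (x, y) -> derivable Sigma (y, x)
| d_proj : forall (x y : seq var) (ix : seq nat),
    size x = size y -> uniq ix -> all (fun i : nat => (i < size x)%N) ix ->
    derivable Sigma (x, y) ->
    derivable Sigma ([seq nth 0%N x i | i <- ix], [seq nth 0%N y i | i <- ix])
| d_trans : forall x y z,
    derivable Sigma (x, y) -> derivable Sigma (y, z) -> derivable Sigma (x, z).

(* Main.v *)
From HB Require Import structures.
From mathcomp Require Import all_boot all_order all_algebra.
From mathcomp Require Import Rstruct all_fingroup.
From Stdlib Require Rdefinitions.
From Stdlib Require Import ClassicalEpsilon Classical.
Require Import Defs.
Set Implicit Arguments. Unset Strict Implicit. Unset Printing Implicit Defensive.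
Import Order.TTheory GRing.Theory Num.Theory.

Definition pb (P : Prop) : bool := if excluded_middle_informative P then true else false.
Lemma pbP P : reflect P (pb P).
Proof. by rewrite /pb; case: excluded_middle_informative => h; constructor. Qed.

Definition vars (D : seq var) n (z : {ffun 'I_n -> seq_sub D}) : seq var :=
  [seq val (z i) | i <- enum 'I_n].
Definition par n (b : {ffun 'I_n -> bool}) : bool := \big[addb/false]_(i < n) b i.
Definition Cls Sigma (x : seq var) D n (z : {ffun 'I_n -> seq_sub D}) : bool :=
  pb (derivable Sigma (x, vars z)).
Definition validb Sigma x D n (p : {ffun 'I_n -> seq_sub D} * {ffun 'I_n -> bool}) : bool :=
  injectiveb p.1 && (Cls Sigma x p.1 == ~~ par p.2).
Definition Idx Sigma x D n : finType :=
  {p : {ffun 'I_n -> seq_sub D} * {ffun 'I_n -> bool} | validb Sigma x p}.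

Definition rowf Sigma x D n (p : Idx Sigma x D n) (d : var) : option ('I_n * bool) :=
  omap (fun i => (i, (val p).2 i)) [pick i | val ((val p).1 i) == d].

Lemma toggle_par n (b : {ffun 'I_n -> bool}) i0 :
  par [ffun i => if i == i0 then ~~ b i else b i] = ~~ par b.
Proof.
rewrite /par (bigD1 i0) //= [in RHS](bigD1 i0) //= ffunE eqxx.
rewrite addNb; congr (~~ (_ (+) _)); apply: eq_bigr => i Hi.
by rewrite ffunE (negbTE Hi).
Qed.

Lemma vars_uniq D n (z : {ffun 'I_n -> seq_sub D}) : injective z -> uniq (vars z).
Proof.
move=> iz; rewrite /vars map_inj_uniq ?enum_uniq // => i j /val_inj; exact: iz.
Qed.

Lemma rowf_val Sigma x D n (p : Idx Sigma x D n) i :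
  rowf p (val ((val p).1 i)) = Some (i, (val p).2 i).
Proof.
rewrite /rowf; case: pickP => [j /eqP/val_inj Hj|/(_ i)]; last by rewrite eqxx.
have iz : injective (val p).1 by apply/injectiveP; case/andP: (valP p).
by rewrite (iz _ _ Hj).
Qed.

Lemma rowf_Some Sigma x D n (p : Idx Sigma x D n) d i b :
  rowf p d = Some (i, b) -> val ((val p).1 i) = d /\ (val p).2 i = b.
Proof.
rewrite /rowf; case: pickP => [j /eqP Hj|//] /= [<- <-] //.
Qed.


Lemma lift_seq (D s : seq var) : {subset s <= D} -> exists s' : seq (seq_sub D), map val s' = s.
Proof.
elim: s => [|a s IH] H; first by exists [::].
have Ha : a \in D by apply: H; rewrite inE eqxx.
have [s' Hs'] : exists s' : seq (seq_sub D), map val s' = s by apply: IH => w Hw; apply: H; rewrite inE Hw orbT.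
by exists (SeqSub Ha :: s'); rewrite /= Hs'.
Qed.

Lemma perm_ext (T : finType) (su sv : seq T) : uniq su -> uniq sv -> size su = size sv ->
  exists pi : {perm T}, map pi su = sv.
Proof.
elim: su sv => [|a su IH] [|b sv] //=; first by exists 1%g.
move=> /andP[nau usu] /andP[nbv usv] [Hs].
have [pi Hpi] := IH sv usu usv Hs.
exists (pi * tperm (pi a) b)%g.
rewrite permM tpermL; congr (_ :: _).
rewrite -Hpi; apply/eq_in_map => w Hw /=.
rewrite permM tpermD //.
- by apply: contra nau => /eqP/perm_inj ->.
- by apply: contra nbv => /eqP ->; rewrite -Hpi map_f.
Qed.

Lemma exists_pi (D u v : seq var) : uniq u -> uniq v -> size u = size v ->
  {subset u <= D} -> {subset v <= D} ->
  exists pi : {perm seq_sub D},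
    (forall w, val w \in u -> val (pi w) = nth 0%N v (index (val w) u)) /\
    (forall w, val w \notin u -> val (pi w) \notin v).
Proof.
move=> uu uv Hs Hu Hv.
have [su Hsu] := lift_seq Hu; have [sv Hsv] := lift_seq Hv.
have usu : uniq su by rewrite -(map_inj_uniq val_inj) Hsu.
have usv : uniq sv by rewrite -(map_inj_uniq val_inj) Hsv.
have Hsz : size su = size sv by rewrite -(size_map val) Hsu -(size_map val sv) Hsv.
have [pi Hpi] := @perm_ext _ su sv usu usv Hsz.
have ss : size su = size u by rewrite -Hsu size_map.
have key : forall w, val w \in u -> w = nth w su (index (val w) u) /\ pi w = nth (pi w) sv (index (val w) u).
  move=> w Hw; have Hj : (index (val w) u < size su)%N by rewrite ss index_mem.
  have E : nth w su (index (val w) u) = w.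
    apply: val_inj; rewrite -(nth_map w (val w)) // Hsu nth_index //.
  split; first by rewrite E.
  by rewrite -Hpi (nth_map w) // E.
exists pi; split.
  move=> w Hw; have [_ ->] := key w Hw.
  rewrite -(nth_map (pi w) 0%N) ?Hsv //.
  by rewrite -(size_map val) Hsv -Hs index_mem.
move=> w Hw; apply: contra Hw => Hpw.
have Hj : (index (val (pi w)) v < size sv)%N by rewrite -(size_map val) Hsv index_mem.
have E : nth (pi w) sv (index (val (pi w)) v) = pi w.
  apply: val_inj; rewrite -(nth_map (pi w) (val (pi w))) // Hsv nth_index //.
have : w = nth w su (index (val (pi w)) v).
  apply: (@perm_inj _ pi); rewrite -(nth_map w (pi w)) ?ss ?Hs -?(size_map val) ?Hsv ?index_mem //.
  by rewrite Hpi E.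
move=> ->; rewrite -Hsu; apply: map_f; apply: mem_nth.
by rewrite ss Hs index_mem.
Qed.


Definition zmap (D : seq var) n (pi : {perm seq_sub D}) (z : {ffun 'I_n -> seq_sub D}) :
  {ffun 'I_n -> seq_sub D} := [ffun i => pi (z i)].
Definition toggle n (b : {ffun 'I_n -> bool}) (o : option 'I_n) :=
  match o with Some i0 => [ffun i => if i == i0 then ~~ b i else b i] | None => b end.
Definition Psi_raw Sigma x (D : seq var) n (u : seq var) (pi : {perm seq_sub D})
  (p : {ffun 'I_n -> seq_sub D} * {ffun 'I_n -> bool}) :=
  let z' := zmap pi p.1 in
  (z', if Cls Sigma x p.1 == Cls Sigma x z' then p.2
       else toggle p.2 [pick i | val (p.1 i) \notin u]).

Lemma cls_inside Sigma x D n (u v : seq var) (pi : {perm seq_sub D})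
  (z : {ffun 'I_n -> seq_sub D}) :
  size u = size v -> derivable Sigma (u, v) ->
  (forall w, val w \in u -> val (pi w) = nth 0%N v (index (val w) u)) ->
  injective z -> (forall i, val (z i) \in u) ->
  Cls Sigma x z = Cls Sigma x (zmap pi z).
Proof.
move=> Hs Duv Hpi iz Hin.
pose ix := [seq index w u | w <- vars z].
have D1 : derivable Sigma (vars z, vars (zmap pi z)).
  have E1 : [seq nth 0%N u i | i <- ix] = vars z.
    rewrite /ix -map_comp -[RHS]map_id; apply/eq_in_map => w /= Hw.
    rewrite nth_index //; move: Hw; rewrite /vars => /mapP [i _ ->]; exact: Hin.
  have E2 : [seq nth 0%N v i | i <- ix] = vars (zmap pi z).
    rewrite /ix /vars -!map_comp; apply/eq_in_map => i _ /=.
    by rewrite ffunE Hpi.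
  rewrite -E1 -E2; apply: d_proj => //.
  - rewrite /ix map_inj_in_uniq ?vars_uniq // => a b Ha Hb Hab.
    have Ha' : a \in u by move: Ha; rewrite /vars => /mapP [i _ ->]; exact: Hin.
    have Hb' : b \in u by move: Hb; rewrite /vars => /mapP [i _ ->]; exact: Hin.
    by rewrite -(nth_index 0%N Ha') Hab nth_index.
  - apply/allP => j /mapP [w Hw ->]; rewrite index_mem.
    by move: Hw; rewrite /vars => /mapP [i _ ->]; exact: Hin.
apply/idP/idP => /pbP H; apply/pbP.
  exact: d_trans H D1.
exact: d_trans H (d_sym D1).
Qed.

Lemma Psi_valid Sigma x D n (u v : seq var) (pi : {perm seq_sub D})
  (p : {ffun 'I_n -> seq_sub D} * {ffun 'I_n -> bool}) :
  size u = size v -> derivable Sigma (u, v) ->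
  (forall w, val w \in u -> val (pi w) = nth 0%N v (index (val w) u)) ->
  validb Sigma x p -> validb Sigma x (Psi_raw Sigma x u pi p).
Proof.
move=> Hs Duv Hpi /andP [/injectiveP iz /eqP Hv].
rewrite /validb /Psi_raw /=; apply/andP; split.
  apply/injectiveP => i j; rewrite !ffunE => /perm_inj; exact: iz.
case: ifP => [/eqP <-|/eqP Hne]; first by rewrite Hv.
case: pickP => [i0 Hi0|none] /=.
  rewrite toggle_par -Hv; apply/eqP.
  by case: (Cls Sigma x p.1) (Cls Sigma x (zmap pi p.1)) Hne => [] [].
exfalso; apply: Hne; apply: cls_inside Hs Duv Hpi iz _ => i.
by have := none i => /negbFE.
Qed.


Lemma count_le Sigma x (D : seq var) n (u v : seq var) :
  uniq u -> uniq v -> size u = size v -> {subset u <= D} -> {subset v <= D} ->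
  derivable Sigma (u, v) -> forall t,
  (#|[pred p : Idx Sigma x D n | map (rowf p) u == t]| <=
   #|[pred p : Idx Sigma x D n | map (rowf p) v == t]|)%N.
Proof.
move=> uu uv Hs Hu Hv Duv t.
have [pi [Hpi Hpi']] := exists_pi uu uv Hs Hu Hv.
pose f (p : Idx Sigma x D n) : Idx Sigma x D n :=
  Sub (Psi_raw Sigma x u pi (val p)) (Psi_valid Hs Duv Hpi (valP p)).
have finj : injective f.
  move=> [[z1 b1] Hp] [[z2 b2] Hq] /(congr1 val); rewrite /f !SubK /Psi_raw /= => -[Hz Hb].
  have Ez : z1 = z2.
    apply/ffunP => i; have := congr1 (fun g : {ffun 'I_n -> seq_sub D} => g i) Hz; rewrite /zmap !ffunE; exact: perm_inj.
  subst z2; apply: val_inj => /=; congr (_, _); move: Hb.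
  case: ifP => _ //; case: pickP => [i0 _|_] //= Hb.
  apply/ffunP => i; have := congr1 (fun g : {ffun 'I_n -> bool} => g i) Hb; rewrite !ffunE.
  by case: (i == i0) => //; move/negbLR; rewrite negbK.
have pat : forall p, map (rowf (f p)) v = map (rowf p) u.
  move=> p; apply: (@eq_from_nth _ None); first by rewrite !size_map Hs.
  move=> j; rewrite size_map => Hj.
  have Hj' : (j < size u)%N by rewrite Hs.
  rewrite (nth_map 0%N) // (nth_map 0%N) //.
  have Hpred : forall i, (val ((val (f p)).1 i) == nth 0%N v j) = (val ((val p).1 i) == nth 0%N u j).
    move=> i; rewrite /f SubK /Psi_raw /= ffunE.
    move: (sval p).1 => z; move: (z i) => w.
    have -> : ssval w = \val w by [].
    have -> : ssval (pi w) = \val (pi w) by [].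
    have [Hin|Hin] := boolP (\val w \in u).
      have Hi1 : (index (\val w) u < size v)%N by rewrite -Hs index_mem.
      rewrite Hpi // nth_uniq //.
      apply/eqP/eqP => [<-|->]; first by rewrite nth_index.
      by rewrite index_uniq.
    have Hn := Hpi' w Hin.
    apply/eqP/eqP => E.
      by move: Hn; rewrite E mem_nth.
    by move: Hin; rewrite E mem_nth.
  rewrite /rowf (eq_pick Hpred); case: pickP => [i /eqP Hi|_] //=.
  congr (Some (_, _)).
  case: ifP => _ //; case: pickP => [i0 Hi0|_] //=; rewrite ffunE.
  case: eqP => // Ei; move: Hi0; rewrite -Ei Hi mem_nth //.
rewrite -(card_imset _ finj); apply: subset_leq_card; apply/subsetP => q /imsetP [p].
by rewrite !inE => Hp ->; rewrite pat.
Qed.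

Local Open Scope ring_scope.

Lemma marg_part (V : eqType) (T : pteam V) (z : seq var) (S : seq (seq V))
  (G : pred (seq V)) :
  uniq S -> (forall i : idx T, [seq row i v | v <- z] \in S) ->
  \sum_(i : idx T | G [seq row i v | v <- z]) wt i =
  \sum_(s <- S | G s) marg T z s.
Proof.
move=> uS HS; rewrite /marg.
under [RHS]eq_bigr do rewrite big_mkcond.
rewrite big_mkcond exchange_big /=; apply: eq_bigr => i _.
rewrite (big_rem [seq row i v | v <- z]) ?HS //= eqxx.
rewrite big1_seq ?addr0 //.
move=> s /andP[Gs]; rewrite mem_rem_uniq // inE => /andP[ns _].
by rewrite eq_sym (negbTE ns).
Qed.

Lemma marg_gen (V : eqType) (T : pteam V) (x y : seq var) (G : pred (seq V)) :
  (forall s, marg T x s = marg T y s) ->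
  \sum_(i : idx T | G [seq row i v | v <- x]) wt i =
  \sum_(i : idx T | G [seq row i v | v <- y]) wt i.
Proof.
move=> H.
set S := undup ([seq [seq row i v | v <- x] | i <- enum (idx T)] ++
                [seq [seq row i v | v <- y] | i <- enum (idx T)]).
rewrite (@marg_part _ _ x S) ?undup_uniq //; last first.
  by move=> i; rewrite mem_undup mem_cat; apply/orP; left; apply: (map_f (fun i => [seq row i v | v <- x])); rewrite mem_enum.
rewrite (@marg_part _ _ y S) ?undup_uniq //; last first.
  by move=> i; rewrite mem_undup mem_cat; apply/orP; right; apply: (map_f (fun i => [seq row i v | v <- y])); rewrite mem_enum.
by apply: eq_bigr => s _; rewrite H.
Qed.

Lemma sound_marg (V : eqType) (T : pteam V) Sigma a : derivable Sigma a ->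
  (forall b, b \in Sigma -> forall t, marg T b.1 t = marg T b.2 t) ->
  forall t, marg T a.1 t = marg T a.2 t.
Proof.
move=> D HS; elim: D.
- by move=> b Hb; apply: HS.
- by [].
- by move=> x y _ IH t; rewrite IH.
- move=> x y ix Hs Hu Hall _ IH t.
  case: (pickP (idx T)) => [i0 _|none]; last first.
    by rewrite /marg !big_pred0 // => i; have := none i.
  pose d0 := row i0 0%N.
  pose G := fun s : seq V => [seq nth d0 s j | j <- ix] == t.
  have E : forall z : seq var, size z = size x -> forall i : idx T,
     ([seq row i v | v <- [seq nth 0%N z j | j <- ix]] == t) = G [seq row i v | v <- z].
    move=> z Hz i; rewrite /G -map_comp; congr (_ == _); apply/eq_in_map => j Hj /=.
    have jlt : (j < size z)%N by rewrite Hz; exact: (allP Hall).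
    by rewrite (nth_map 0%N) // (set_nth_default d0) ?size_map.
  rewrite /marg (eq_bigl _ _ (E x erefl)) (eq_bigl _ _ (E y (esym Hs))).
  exact: marg_gen.
- by move=> x y z _ IH1 _ IH2 t; rewrite IH1 IH2.
Qed.

Lemma soundness Sigma sigma : derivable Sigma sigma -> models Sigma sigma.
Proof.
move=> D V T Hdom HS; split.
  move=> v Hv; apply: Hdom; rewrite /= mem_cat Hv //.
apply: (sound_marg D) => b /HS [] //.
Qed.


Lemma map_nth_enum (s : seq var) n : size s = n ->
  [seq nth 0%N s (val i) | i <- enum 'I_n] = s.
Proof.
move=> <-; rewrite (map_comp (nth 0%N s) val) val_enum_ord.
exact: mkseq_nth.
Qed.

Lemma Idx_wit Sigma (x : seq var) (D : seq var) :
  uniq x -> {subset x <= D} -> exists p : Idx Sigma x D (size x),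
    vars (sval p).1 = x /\ forall i, (sval p).2 i = false.
Proof.
move=> ux Hx.
have Hm : forall i : 'I_(size x), nth 0%N x i \in D by move=> i; apply: Hx; apply: mem_nth.
pose z0 : {ffun 'I_(size x) -> seq_sub D} := [ffun i => SeqSub (Hm i)].
pose b0 : {ffun 'I_(size x) -> bool} := [ffun _ => false].
have Hv : vars z0 = x.
  rewrite /vars -[RHS](map_nth_enum (erefl (size x))); apply/eq_in_map => i _.
  by rewrite ffunE.
have V0 : validb Sigma x (z0, b0).
  rewrite /validb /=; apply/andP; split.
    apply/injectiveP => i j; rewrite !ffunE => -[] /eqP; rewrite nth_uniq // => /eqP.
    exact: val_inj.
  have -> : par b0 = false by rewrite /par big1 // => i _; rewrite ffunE.
  by apply/eqP/pbP; rewrite Hv; apply: d_refl.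
exists (Sub (z0, b0) V0); rewrite SubK /=; split => // i.
by rewrite ffunE.
Qed.

Lemma Idx_nonempty Sigma (x : seq var) (D : seq var) :
  uniq x -> {subset x <= D} -> (0 < #|Idx Sigma x D (size x)|)%N.
Proof.
move=> ux Hx; have [p _] := Idx_wit Sigma ux Hx.
by apply/card_gt0P; exists p.
Qed.

Section T.
Lemma wt_rng (N : nat) : (0 < N)%N -> 0 <= (N%:R : Rdefinitions.R)^-1 <= 1.
Proof.
move=> HN; have HN' : (0 : Rdefinitions.R) < N%:R by rewrite ltr0n.
by rewrite invr_ge0 ltW //= invf_le1 // ler1n.
Qed.
End T.

Lemma wt_sm (I : finType) : (0 < #|I|)%N ->
  \sum_(i : I) (#|I|%:R : Rdefinitions.R)^-1 = 1.
Proof.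
move=> HN; rewrite sumr_const -[(_^-1) *+ _]mulr_natr mulVf //.
by rewrite pnatr_eq0 -lt0n.
Qed.

Lemma rowf_inj Sigma x D n (p q : Idx Sigma x D n) :
  (forall d, d \in D -> rowf p d = rowf q d) -> p = q.
Proof.
move=> H.
have E : forall i, (sval q).1 i = (sval p).1 i /\ (sval q).2 i = (sval p).2 i.
  move=> i; have := H _ (ssvalP ((sval p).1 i)).
  rewrite rowf_val => /esym /rowf_Some [E1 E2]; split => //.
  exact: val_inj.
move: E; case: p {H} => [[z1 b1] Hp]; case: q => [[z2 b2] Hq] /= E.
apply: val_inj => /=.
by congr (_, _); apply/ffunP => i; case: (E i).
Qed.

Definition mkteam Sigma (x D : seq var) (HN : (0 < #|Idx Sigma x D (size x)|)%N) :
  pteam (option ('I_(size x) * bool)) :=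
  @PTeam _ D (Idx Sigma x D (size x)) (@rowf Sigma x D (size x))
    (fun _ => (#|Idx Sigma x D (size x)|%:R)^-1) (fun _ => wt_rng HN) (wt_sm HN)
    (@rowf_inj Sigma x D (size x)).

Lemma marg_cnt Sigma (x D : seq var) (HN : (0 < #|Idx Sigma x D (size x)|)%N) u t :
  marg (mkteam HN) u t =
  (#|Idx Sigma x D (size x)|%:R)^-1 *+ #|[pred p : Idx Sigma x D (size x) | map (rowf p) u == t]|.
Proof.
rewrite /marg /= (eq_bigl (fun p => p \in [pred p : Idx Sigma x D (size x) | map (rowf p) u == t])) ?sumr_const //.
Qed.


Lemma natmul_inj (c : Rdefinitions.R) a b : c != 0 -> c *+ a = c *+ b -> a = b.
Proof. by move=> Hc; rewrite -!(mulr_natr c) => /(mulfI Hc)/eqP; rewrite eqr_nat => /eqP. Qed.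

Theorem mainTheorem20 (Sigma : seq atom) (sigma : atom) :
  (forall a, a \in sigma :: Sigma -> wf_atom a) ->
  (models Sigma sigma <-> derivable Sigma sigma).
Proof.
move=> Hwf; split; last exact: soundness.
case: sigma Hwf => x y Hwf Hm.
apply: NNPP => nd.
pose D := undup (flatten [seq atom_vars a | a <- (x, y) :: Sigma]).
have HD : forall a, a \in (x, y) :: Sigma -> {subset atom_vars a <= D}.
  move=> a Ha w Hw; rewrite mem_undup; apply/flattenP; exists (atom_vars a) => //.
  exact: map_f.
have := Hwf _ (mem_head _ _); case/and3P => ux uy /eqP sxy.
have sxy' : size x = size y := sxy.
have Hx : {subset x <= D}.
  by move=> w Hw; apply: (HD (x, y) (mem_head _ _)); rewrite /atom_vars mem_cat Hw.
have [p0 [Hv0 Hb0]] := Idx_wit Sigma ux Hx.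
have HN := Idx_nonempty Sigma ux Hx.
pose T := mkteam HN.
have Hsat : sat T (x, y).
  apply: Hm.
    by move=> w Hw; rewrite /T /= /D mem_undup.
  move=> [u v] Ha; have Ha' : (u, v) \in (x, y) :: Sigma by rewrite inE Ha orbT.
  have := Hwf _ Ha'; case/and3P => uu uv /eqP suv.
  split; first exact: HD Ha'.
  have Hu : {subset u <= D} by move=> w Hw; apply: (HD _ Ha'); rewrite /atom_vars mem_cat Hw.
  have Hv' : {subset v <= D} by move=> w Hw; apply: (HD _ Ha'); rewrite /atom_vars mem_cat Hw orbT.
  move=> t; rewrite /= !marg_cnt; congr (_ *+ _); apply/eqP; rewrite eqn_leq.
  rewrite (@count_le Sigma x D (size x) u v uu uv suv Hu Hv' (d_ax Ha)) /=.
  exact: (@count_le Sigma x D (size x) v u uv uu (esym suv) Hv' Hu (d_sym (d_ax Ha))).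
pose t0 := [seq Some (i, false) | i <- enum 'I_(size x)].
case: Hsat => _ /(_ t0); rewrite /T !marg_cnt.
have Hne : ((#|Idx Sigma x D (size x)|%:R : Rdefinitions.R)^-1) != 0.
  by rewrite invr_eq0 pnatr_eq0 -lt0n.
move/(natmul_inj Hne).
have -> : #|[pred p : Idx Sigma x D (size x) | map (rowf p) y == t0]| = 0%N.
  apply: eq_card0 => p; rewrite !inE; apply/negP => /eqP E.
  have Hi : forall i : 'I_(size x), rowf p (nth 0%N y i) = Some (i, false).
    move=> i; have := congr1 (fun s => nth None s i) E => /=.
    have iy : (i < size y)%N by rewrite -sxy'.
    by rewrite (nth_map 0%N) // /t0 (nth_map i) ?size_enum_ord // nth_ord_enum.
  have Hvy : vars (sval p).1 = y.
    rewrite /vars -[RHS](map_nth_enum (esym sxy')); apply/eq_in_map => i _.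
    by have [-> _] := rowf_Some (Hi i).
  have Hpar : par (sval p).2 = false.
    by rewrite /par big1 // => i _; have [_ ->] := rowf_Some (Hi i).
  have := valP p; case/andP => _; rewrite Hpar /= => /eqP /pbP.
  by rewrite Hvy.
apply/eqP; rewrite -lt0n; apply/card_gt0P; exists p0; rewrite inE.
have E : forall s, s = vars (sval p0).1 -> map (rowf p0) s = t0.
  move=> s ->; rewrite /vars -map_comp /t0; apply/eq_in_map => i _ /=.
  by rewrite rowf_val Hb0.
by rewrite (E x (esym Hv0)).
Qed.
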